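(* Let $n\ge2$, let $p>2$ be prime, $M=(p-1)/2$, and $\delta>0$. Let $z_j^{(i)}$, $\tilde z_j^{(i)}\in\mathbb{Q}_{(M,\delta)}$ (for $i\in\{1,2\}$, $j\in\{1,\dots,n\}$) and $\tilde r=\frac{1}{n-1}\sum_{j=1}^n\tilde z_j^{(1)}\tilde z_j^{(2)}$ be as in the context. Suppose $R\in\mathbb{R}$ satisfies $|\tilde z_j^{(i)}|\le R$ for all $i,j$, and $R\le n/\delta$. If $M\ge\frac{n-1}{\delta^2}+n\left(\frac{R}{\delta}+\frac14\right)$, then $$\tilde r=\frac{1}{n-1}\,\varphi_{\delta^2}^{-1}\Big(\sum_{j=1}^n\varphi_\delta(\tilde z_j^{(1)})\,\varphi_\delta(\tilde z_j^{(2)})\Big),$$ where the sum and products inside $\varphi_{\delta^2}^{-1}$ are computed in $\mathbb{F}_p$.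
   Context: For $\gamma>0$, $\mathbb{Q}_{(M,\gamma)}=\{x\gamma: x\in\mathbb{Z},\ -M\le x\le M\}$ and $\varphi_\gamma:\mathbb{Q}_{(M,\gamma)}\to\mathbb{F}_p$, $\varphi_\gamma(x\gamma)=x\bmod p$; with $M=(p-1)/2$ this is a bijection with inverse $\varphi_\gamma^{-1}(y)=\gamma\psi(y)$, where, representing $y$ by an integer in $\{0,\dots,p-1\}$, $\psi(y)=y$ if $y\le M$ and $\psi(y)=y-p$ otherwise. For $i=1,2$, $x_1^{(i)},\dots,x_n^{(i)}$ are real samples (not all equal) with mean $\bar x^{(i)}$, $s^{(i)}=\sqrt{\frac{1}{n-1}\sum_j(x_j^{(i)}-\bar x^{(i)})^2}$, and $z_j^{(i)}=(x_j^{(i)}-\bar x^{(i)})/s^{(i)}$; $\tilde z_j^{(i)}$ is a nearest element of $\mathbb{Q}_{(M,\delta)}$ to $z_j^{(i)}$, with $|z_j^{(i)}-\tilde z_j^{(i)}|\le\delta/2$. *)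

(* Defs.v *)
From HB Require Import structures.
From mathcomp Require Import all_boot all_order all_algebra.
From mathcomp Require Import reals.
Set Implicit Arguments. Unset Strict Implicit. Unset Printing Implicit Defensive.
Import Order.TTheory GRing.Theory Num.Theory.
Local Open Scope ring_scope.

Section Defs.
Variable R : realType.

Definition inQ (M : nat) (gamma : R) (q : R) : Prop :=
  exists x : int, (- (M%:Z) <= x)%R /\ (x <= M%:Z)%R /\ q = x%:~R * gamma.

(* phi_gamma (x*gamma) = x mod p ; for q in Q_(M,gamma) (gamma>0), q/gamma is
   the integer x, recovered exactly by floor. *)
Definition phi (p : nat) (gamma : R) (q : R) : 'F_p :=
  (Num.floor (q / gamma))%:~R.

Definition psi (p : nat) (y : 'F_p) : int :=
  if (val y <= (p.-1)./2)%N then (val y)%:Z else (val y)%:Z - p%:Z.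

Definition phi_inv (p : nat) (gamma : R) (y : 'F_p) : R := gamma * (psi y)%:~R.

Definition mean (n : nat) (x : 'I_n -> R) : R := (\sum_(j < n) x j) / n%:R.

Definition sdev (n : nat) (x : 'I_n -> R) : R :=
  Num.sqrt ((\sum_(j < n) (x j - mean x) ^+ 2) / (n.-1)%:R).

Definition zscore (n : nat) (x : 'I_n -> R) (j : 'I_n) : R :=
  (x j - mean x) / sdev x.

End Defs.

(* Main.v *)
Require Import Defs.
From HB Require Import structures.
From mathcomp Require Import all_boot all_order all_algebra.
From mathcomp Require Import reals.
From mathcomp Require Import lra zify ring.
Import Order.TTheory GRing.Theory Num.Theory.
Local Open Scope ring_scope.

Lemma psi_int (p : nat) (S : int) : prime p -> (2 < p)%N ->
  `|S| <= ((p.-1)./2)%:Z -> psi (S%:~R : 'F_p) = S.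
Proof.
move=> pp p2; case: S => k Hk.
- have kp : (k < p)%N.
    have : (k <= (p.-1)./2)%N by rewrite -lez_nat.
    lia.
  rewrite /psi /= val_Fp_nat // modn_small //.
  have -> : (k <= (p.-1)./2)%N by rewrite -lez_nat.
  by [].
- have kp : (k.+1 <= (p.-1)./2)%N.
    by move: Hk; rewrite NegzE normrN -lez_nat.
  have E : ((Negz k)%:~R : 'F_p) = (p - k.+1)%:R.
    rewrite NegzE mulrNz natrB; last by lia.
    by rewrite pchar_Fp_0 // sub0r.
  rewrite /psi E /= val_Fp_nat // modn_small; last by lia.
  have -> : ((p - k.+1) <= (p.-1)./2)%N = false by lia.
  rewrite NegzE; lia.
Qed.
Lemma zscore_sq (R : realType) n (x : 'I_n -> R) : (2 <= n)%N ->
  (exists j k, x j != x k) -> \sum_j zscore x j ^+ 2 = (n.-1)%:R.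
Proof.
move=> n2 [j [k njk]].
set m := mean x.
set Q := \sum_(i < n) (x i - m) ^+ 2.
have Q0 : 0 <= Q by apply: sumr_ge0 => i _; exact: sqr_ge0.
have Qn0 : Q != 0.
  apply/negP => /eqP /psumr_eq0P H.
  have {}H := H (fun i _ => sqr_ge0 _).
  have Hj := H j isT; have Hk := H k isT.
  have ej : x j = m by apply/eqP; rewrite -subr_eq0 -sqrf_eq0 Hj.
  have ek : x k = m by apply/eqP; rewrite -subr_eq0 -sqrf_eq0 Hk.
  by rewrite ej ek eqxx in njk.
have n1 : (n.-1)%:R != 0 :> R by rewrite pnatr_eq0; lia.
have s2 : sdev x ^+ 2 = Q / (n.-1)%:R.
  rewrite /sdev sqr_sqrtr //; apply: divr_ge0 => //; exact: ler0n.
have sn0 : sdev x ^+ 2 != 0 by rewrite s2 mulf_neq0 // invr_eq0.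
rewrite /zscore.
under eq_bigr => i _ do rewrite expr_div_n.
rewrite -mulr_suml -/m -/Q s2.
by field; apply/andP.
Qed.

Lemma cs_le (R : realType) (u v : R) : `|u * v| <= (u ^+ 2 + v ^+ 2) / 2.
Proof.
rewrite normrM -(real_normK (num_real u)) -(real_normK (num_real v)).
have := sqr_ge0 (`|u| - `|v|); nra.
Qed.

Lemma err_le (R : realType) (a1 a2 z1 z2 Rb d : R) :
  `|a1| <= Rb -> `|a2| <= Rb -> `|z1 - a1| <= d / 2 -> `|z2 - a2| <= d / 2 ->
  `|a1 * a2 - z1 * z2| <= Rb * d + d ^+ 2 / 4.
Proof.
move=> h1 h2 h3 h4.
have -> : a1 * a2 - z1 * z2 = a1 * (a2 - z2) + (a1 - z1) * z2 by ring.
apply: le_trans (ler_normD _ _) _; rewrite !normrM.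
have k1 : `|a1| * `|a2 - z2| <= Rb * (d / 2).
  by apply: ler_pM => //; rewrite distrC.
have h5 : `|z2| <= Rb + d / 2.
  have -> : z2 = a2 + (z2 - a2) by ring.
  by apply: le_trans (ler_normD _ _) _; apply: lerD.
have k2 : `|a1 - z1| * `|z2| <= (d / 2) * (Rb + d / 2).
  by apply: ler_pM => //; rewrite distrC.
lra.
Qed.

Theorem lemma3 (R : realType) (n p : nat) (delta Rb : R)
  (x1 x2 zt1 zt2 : 'I_n -> R) :
  (2 <= n)%N -> prime p -> (2 < p)%N -> 0 < delta ->
  (* samples not all equal *)
  (exists j k : 'I_n, x1 j != x1 k) ->
  (exists j k : 'I_n, x2 j != x2 k) ->
  (* zt are nearest elements of Q_(M,delta) to the z-scores *)
  (forall j, inQ (p.-1)./2 delta (zt1 j)) ->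
  (forall j, inQ (p.-1)./2 delta (zt2 j)) ->
  (forall j q, inQ (p.-1)./2 delta q ->
     `|zscore x1 j - zt1 j| <= `|zscore x1 j - q|) ->
  (forall j q, inQ (p.-1)./2 delta q ->
     `|zscore x2 j - zt2 j| <= `|zscore x2 j - q|) ->
  (forall j, `|zscore x1 j - zt1 j| <= delta / 2) ->
  (forall j, `|zscore x2 j - zt2 j| <= delta / 2) ->
  (forall j, `|zt1 j| <= Rb) ->
  (forall j, `|zt2 j| <= Rb) ->
  Rb <= n%:R / delta ->
  ((p.-1)./2)%:R >= (n.-1)%:R / delta ^+ 2 + n%:R * (Rb / delta + 1 / 4) ->
  (\sum_(j < n) zt1 j * zt2 j) / (n.-1)%:R =
    phi_inv (delta ^+ 2)
      (\sum_(j < n) phi p delta (zt1 j) * phi p delta (zt2 j)) / (n.-1)%:R.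
Proof.
move=> n2 pp p2 d0 ne1 ne2 Q1 Q2 _ _ E1 E2 B1 B2 _ HM.
set M := (p.-1)./2 in HM *.
set a := fun j => Num.floor (zt1 j / delta).
set b := fun j => Num.floor (zt2 j / delta).
have za : forall j, zt1 j = (a j)%:~R * delta.
  by move=> j; rewrite /a; case: (Q1 j) => y [_ [_ ->]]; rewrite mulfK ?gt_eqF // intrKfloor.
have zb : forall j, zt2 j = (b j)%:~R * delta.
  by move=> j; rewrite /b; case: (Q2 j) => y [_ [_ ->]]; rewrite mulfK ?gt_eqF // intrKfloor.
set S := \sum_(j < n) a j * b j.
have sumF : \sum_(j < n) phi p delta (zt1 j) * phi p delta (zt2 j) = (S%:~R : 'F_p).
  rewrite /S rmorph_sum /=; apply: eq_bigr => j _; by rewrite rmorphM.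
have sumR : \sum_(j < n) zt1 j * zt2 j = S%:~R * delta ^+ 2.
  rewrite /S rmorph_sum /= mulr_suml; apply: eq_bigr => j _.
  by rewrite rmorphM za zb /=; ring.
have hz := @zscore_sq R n x1 n2 ne1.
have hz2 := @zscore_sq R n x2 n2 ne2.
have c1 : `|\sum_(j < n) zscore x1 j * zscore x2 j| <= (n.-1)%:R.
  apply: le_trans (ler_norm_sum _ _ _) _.
  apply: (@le_trans _ _ (\sum_(j < n) (zscore x1 j ^+ 2 + zscore x2 j ^+ 2) / 2)).
    by apply: ler_sum => j _; apply: cs_le.
  rewrite -mulr_suml big_split /= hz hz2; lra.
have c2 : `|\sum_(j < n) zt1 j * zt2 j - \sum_(j < n) zscore x1 j * zscore x2 j|
          <= n%:R * (Rb * delta + delta ^+ 2 / 4).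
  rewrite -sumrB; apply: le_trans (ler_norm_sum _ _ _) _.
  have -> : n%:R * (Rb * delta + delta ^+ 2 / 4) = \sum_(j < n) (Rb * delta + delta ^+ 2 / 4).
    by rewrite sumr_const card_ord mulr_natl.

  by apply: ler_sum => j _; apply: err_le; rewrite // distrC.
have c3 : `|(S%:~R : R)| * delta ^+ 2 <= (n.-1)%:R + n%:R * (Rb * delta + delta ^+ 2 / 4).
  rewrite -{1}(@ger0_norm _ (delta ^+ 2)); last by apply: sqr_ge0.
  rewrite -normrM -sumR.
  set A := \sum_(j < n) zt1 j * zt2 j in c2 *.
  set B := \sum_(j < n) zscore x1 j * zscore x2 j in c1 c2.
  have -> : A = (A - B) + B by ring.
  apply: le_trans (ler_normD _ _) _; lra.
have d2 : 0 < delta ^+ 2 by apply: exprn_gt0.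
have c4 : `|(S%:~R : R)| <= M%:R.
  rewrite -(ler_pM2r d2); apply: le_trans c3 _.
  have -> : (n.-1)%:R + n%:R * (Rb * delta + delta ^+ 2 / 4) =
     ((n.-1)%:R / delta ^+ 2 + n%:R * (Rb / delta + 1 / 4)) * delta ^+ 2.
    by field; rewrite gt_eqF.
  by rewrite ler_pM2r.
have c5 : `|S| <= M%:Z.
  by rewrite -(ler_int R) intr_norm.
rewrite sumR sumF /phi_inv psi_int //.
by rewrite [S%:~R * _]mulrC.
Qed.
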